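(* Let $(X,u)$ be a regular Čech closure space and $(Y,v)$ an arbitrary Čech closure space, and let $Y^X$ be the set of all continuous maps $(X,u)\to(Y,v)$. For every interior cover $\mathcal C$ of $X$, the $\mathcal C$-topology on $Y^X$ is admissible.
   Context: A Čech closure space $(X,u)$ is a set $X$ with an operator $u:\mathcal P(X)\to\mathcal P(X)$ satisfying $u(\emptyset)=\emptyset$, $A\subset u(A)$, and $u(A\cup B)=u(A)\cup u(B)$. The interior is $\mathrm{int}_u A=X\setminus u(X\setminus A)$; $U$ is a neighbourhood of a point $x$ (of a set $A$) if $x\in\mathrm{int}_uU$ ($A\subset\mathrm{int}_uU$). $(X,u)$ is regular if for each $x\in X$ and $A\subset X$ with $x\notin u(A)$ there are disjoint neighbourhoods of $x$ and of $A$. A map $f:(X,u)\to(Y,v)$ is continuous if $f(u(A))\subset v(f(A))$ for all $A$. An interior cover of $X$ is a family $\mathcal C$ of subsets of $X$ such that $\{\mathrm{int}_uC: C\in\mathcal C\}$ covers $X$. Let $\mathcal V=\{V\subset Y:\mathrm{int}_vV\ne\emptyset\}$ and for $A\subset X$, $V\subset Y$ let $(A,V)=\{f\in Y^X: f(A)\subset V\}$. The $\mathcal C$-topology is the topology on $Y^X$ generated by the subbase $\{(u(K),V): V\in\mathcal V,\ K\subset X \text{ with } u(K)\subset C \text{ for some } C\in\mathcal C\}$. The product $(Z,w)\times(X,u)$ is $Z\times X$ with the closure operator for which the sets $W\times U$ ($W$ a neighbourhood of $z$, $U$ of $x$) form a neighbourhood base at $(z,x)$; for $g:Z\times X\to Y$,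 $g^*(z)(x)=g(z,x)$. A topology on $Y^X$ (regarded as its Kuratowski closure operator $\sigma$) is admissible if for every closure space $(Z,w)$ and every $g:Z\times X\to Y$ with $g^*(Z)\subset Y^X$, continuity of $g^*:(Z,w)\to(Y^X,\sigma)$ implies continuity of $g:(Z,w)\times(X,u)\to(Y,v)$. *)

(* Defs.v *)
From mathcomp Require Import all_boot.
From mathcomp Require Export classical_sets boolp.



Unset Printing Implicit Defensive.

Local Open Scope classical_set_scope.

Definition is_closure {X : Type} (u : set X -> set X) : Prop :=
  [/\ u set0 = set0,
      (forall A, A `<=` u A) &
      (forall A B, u (A `|` B) = u A `|` u B)].

Definition cint {X : Type} (u : set X -> set X) (A : set X) : set X :=
  ~` u (~` A).

Definition cnbhd {X : Type} (u : set X -> set X) (x : X) (U : set X) : Prop :=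
  cint u U x.
Definition cnbhd_set {X : Type} (u : set X -> set X) (A U : set X) : Prop :=
  A `<=` cint u U.

Definition cregular {X : Type} (u : set X -> set X) : Prop :=
  forall (x : X) (A : set X), ~ u A x ->
    exists U V, [/\ cnbhd u x U, cnbhd_set u A V & U `&` V = set0].

Definition ccontinuous {X Y : Type} (u : set X -> set X) (v : set Y -> set Y)
  (f : X -> Y) : Prop :=
  forall A : set X, f @` (u A) `<=` v (f @` A).

Definition interior_cover {X : Type} (u : set X -> set X) (C : set (set X)) : Prop :=
  forall x : X, exists2 c, C c & cint u c x.

(** product closure: W × U (W nbhd of z, U nbhd of x) form a nbhd base at (z,x) *)
Definition prod_closure {Z X : Type} (w : set Z -> set Z) (u : set X -> set X)
  (S : set (Z * X)) : set (Z * X) :=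
  [set p | forall W U, cnbhd w p.1 W -> cnbhd u p.2 U ->
             exists q, [/\ S q, W q.1 & U q.2]].

Inductive gen_open {T : Type} (B : set (set T)) : set T -> Prop :=
  | go_base b : B b -> gen_open B b
  | go_setT : gen_open B setT
  | go_setI a b : gen_open B a -> gen_open B b -> gen_open B (a `&` b)
  | go_bigcup (F : set (set T)) :
      (forall a, F a -> gen_open B a) -> gen_open B (\bigcup_(a in F) a).

Definition kclosure {T : Type} (B : set (set T)) (A : set T) : set T :=
  [set t | forall O, gen_open B O -> O t -> exists2 s, O s & A s].

Definition cmaps {X Y : Type} (u : set X -> set X) (v : set Y -> set Y) :=
  {f : X -> Y | ccontinuous u v f}.

Definition cobox {X Y : Type} {u : set X -> set X} {v : set Y -> set Y}
  (A : set X) (V : set Y) : set (cmaps u v) :=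
  [set f | (sval f) @` A `<=` V].

Definition Ctop_subbase {X Y : Type} (u : set X -> set X) (v : set Y -> set Y)
  (C : set (set X)) : set (set (cmaps u v)) :=
  [set S | exists K V, [/\ cint v V !=set0,
                          (exists2 c, C c & u K `<=` c) &
                          S = @cobox X Y u v (u K) V]].

Definition Ctop_closure {X Y : Type} (u : set X -> set X) (v : set Y -> set Y)
  (C : set (set X)) : set (cmaps u v) -> set (cmaps u v) :=
  kclosure (Ctop_subbase u v C).

Definition admissible {X Y : Type} (u : set X -> set X) (v : set Y -> set Y)
  (sigma : set (cmaps u v) -> set (cmaps u v)) : Prop :=
  forall (Z : Type) (w : set Z -> set Z), is_closure w ->
  forall (g : Z * X -> Y) (hg : forall z, ccontinuous u v (fun x => g (z, x))),
    ccontinuous w sigma (fun z => exist _ (fun x => g (z, x)) (hg z) : cmaps u v) ->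
    ccontinuous (prod_closure w u) v g.

(* Main.v *)
Require Import Defs.
From mathcomp Require Import all_boot classical_sets.
From mathcomp Require Import boolp.

Local Open Scope classical_set_scope.

Lemma cl_mono {X : Type} {u : set X -> set X} : is_closure u ->
  forall A B, A `<=` B -> u A `<=` u B.
Proof.
move=> [_ _ hU] A B hAB t ht.
have -> : B = A `|` B by rewrite setUidr.
by rewrite hU; left.
Qed.

Theorem theorem9 (X Y : Type) (u : set X -> set X) (v : set Y -> set Y)
  (hu : is_closure u) (hreg : cregular u) (hv : is_closure v)
  (C : set (set X)) (hC : interior_cover u C) :
  admissible u v (Ctop_closure u v C).
Proof.
move=> Z w hw g hg hcont S y [[z x] hp <-].
apply: contrapT => hy.
set B := g @` S.
set A0 := (fun x' => g (z, x')) @^-1` B.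
have hA0 : ~ u A0 x.
  move=> hx.
  have h1 := hg z A0 _ (ex_intro2 _ _ x hx erefl).
  apply: hy; move: h1; apply: cl_mono => //.
  by move=> _ [t ht <-].
have [c Cc hcx] := hC x.
have hnx : ~ u (A0 `|` ~` c) x.
  case: hu => _ _ hU; rewrite hU; case=> //.
have [U [V' [hUx hV' hUV]]] := hreg x _ hnx.
have key : u U `<=` ~` (A0 `|` ~` c).
  move=> t ht hin.
  have hUV' : U `<=` ~` V'.
    move=> s hs hs'. have : (U `&` V') s by split.
    by rewrite hUV.
  exact: (hV' t hin (cl_mono hu _ _ hUV' _ ht)).
set O : set (cmaps u v) := @cobox X Y u v (u U) (~` B).
have hOsub : Ctop_subbase u v C O.
  exists U, (~` B); split => //.
  - exists (g (z, x)); rewrite /cint setCK; exact: hy.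
  - exists c => // t /key ht; apply: contrapT => hc; apply: ht; by right.
set gs := fun z0 => exist (fun f => ccontinuous u v f) (fun x0 => g (z0, x0)) (hg z0).
set W0 := [set z' | ~ O (gs z')].
have hW : ~ w W0 z.
  move=> hz.
  have h1 := hcont W0 (gs z) (ex_intro2 _ _ z hz erefl).
  have hOz : O (gs z).
    move=> _ [t ht <-] /= hB; apply: (key t ht); by left.
  have [s Os [z' hz' hs]] := h1 O (go_base _ _ hOsub) hOz.
  by apply: hz'; rewrite -hs in Os.
have hWn : cnbhd w z (~` W0) by rewrite /cnbhd /cint setCK.
have [q [Sq Wq Uq]] := hp (~` W0) U hWn hUx.
have Oq : O (gs q.1) by apply: contrapT.
have hext : forall A, A `<=` u A by case: hu.
have := Oq (g (q.1, q.2)) (ex_intro2 _ _ q.2 (hext U _ Uq) erefl).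
apply; exists q => //; by case: q {Sq Wq Uq Oq}.
Qed.
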